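(* Let $$\mathcal{X} = \left\{(A, B) \in M_4(\mathbb{C}) \times M_4(\mathbb{C}) : \operatorname{Tr} A = \operatorname{Tr} B = 0,\ \|A\|_F^2 + \|B\|_F^2 = \tfrac{1}{4}\right\},$$ and let $\mathcal{Y} \subseteq \mathcal{X}$ be the set of those $(A,B) \in \mathcal{X}$ such that $A$ has four pairwise distinct eigenvalues and $B$ has four pairwise distinct eigenvalues. For $(A,B)$ put $X = A \otimes I_4 + I_4 \otimes B \in M_{16}(\mathbb{C})$ and $\phi(A,B) = \sigma_1(X)^2 + \sigma_2(X)^2$, where $\sigma_1(X)\ge\sigma_2(X)$ are the two largest singular values of $X$. Then $\phi(A,B) \leq \frac{1}{2}$ for all $(A,B) \in \mathcal{X}$ if and only if $\phi(A,B) \leq \frac12$ for all $(A,B) \in \mathcal{Y}$.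
   Context: $\|\cdot\|_F$ denotes the Frobenius norm, $\|A\|_F = (\operatorname{Tr}(A^*A))^{1/2}$. $\otimes$ denotes the Kronecker product. *)

(* Defs.v *)
From HB Require Import structures.
From mathcomp Require Import all_boot all_order all_algebra.
From mathcomp Require Import reals complex mxtens.
Set Implicit Arguments. Unset Strict Implicit. Unset Printing Implicit Defensive.
Import Order.TTheory GRing.Theory Num.Theory.
Local Open Scope ring_scope.

Definition toC (R : realType) (x : R) : R[i] := Complex x 0.

Definition adjmx (R : realType) m n (A : 'M[R[i]]_(m, n)) : 'M[R[i]]_(n, m) :=
  (map_mx (fun z => z^*) A)^T.

Definition frob2 (R : realType) n (A : 'M[R[i]]_n) : R[i] := \tr (adjmx A *m A).

(* s is the list of singular values of X : the n nonnegative reals, sorted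
   nonincreasingly, whose squares are the eigenvalues (with multiplicity,
   i.e. the roots of the characteristic polynomial) of X^* X. *)
Definition singular_values (R : realType) n (X : 'M[R[i]]_n) (s : seq R) : Prop :=
  [/\ size s = n, sorted >=%R s, all (fun x => 0 <= x) s &
      char_poly (adjmx X *m X) = \prod_(x <- s) ('X - (toC (x ^+ 2))%:P)].

Definition Xmat (R : realType) (A B : 'M[R[i]]_4) : 'M[R[i]]_(4 * 4) :=
  A *t (1%:M : 'M[R[i]]_4) + (1%:M : 'M[R[i]]_4) *t B.

Definition phi_le (R : realType) (A B : 'M[R[i]]_4) (c : R) : Prop :=
  forall s, singular_values (Xmat A B) s -> s`_0 ^+ 2 + s`_1 ^+ 2 <= c.

Definition inX (R : realType) (A B : 'M[R[i]]_4) : Prop :=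
  \tr A = 0 /\ \tr B = 0 /\ frob2 A + frob2 B = 1 / 4.

Definition distinct_eigs4 (R : realType) (A : 'M[R[i]]_4) : Prop :=
  exists e : 'I_4 -> R[i], injective e /\ forall k, eigenvalue A (e k).

Definition inY (R : realType) (A B : 'M[R[i]]_4) : Prop :=
  inX A B /\ distinct_eigs4 A /\ distinct_eigs4 B.

(* Main.v *)
Require Import Defs.
From HB Require Import structures.
From mathcomp Require Import all_boot all_order all_algebra.
From mathcomp Require Import reals complex mxtens.
From mathcomp Require Import spectral sesquilinear.
From mathcomp Require Import ring lra.
Import Order.TTheory GRing.Theory Num.Theory.
Set Implicit Arguments. Unset Strict Implicit. Unset Printing Implicit Defensive.
Local Open Scope ring_scope.



Section Basics.
Variable R : realType.
Local Notation C := (R[i]).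

Definition fro m n (Z : 'M[C]_(m, n)) : C := \tr (adjmx Z *m Z).

Lemma adjmxE m n (A : 'M[C]_(m, n)) i j : adjmx A i j = (A j i)^*.
Proof. by rewrite !mxE. Qed.

Lemma adjmxK m n (A : 'M[C]_(m, n)) : adjmx (adjmx A) = A.
Proof. by apply/matrixP=> i j; rewrite !adjmxE conjCK. Qed.

Lemma adjmxM m n p (A : 'M[C]_(m, n)) (B : 'M[C]_(n, p)) :
  adjmx (A *m B) = adjmx B *m adjmx A.
Proof.
apply/matrixP=> i j; rewrite adjmxE !mxE rmorph_sum; apply: eq_bigr => k _.
by rewrite !adjmxE rmorphM mulrC.
Qed.

Lemma adjmxD m n (A B : 'M[C]_(m, n)) : adjmx (A + B) = adjmx A + adjmx B.
Proof. by apply/matrixP=> i j; rewrite !mxE rmorphD. Qed.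

Lemma adjmxZ m n a (A : 'M[C]_(m, n)) : adjmx (a *: A) = a^* *: adjmx A.
Proof. by apply/matrixP=> i j; rewrite !mxE rmorphM. Qed.

Lemma adjmx1 n : adjmx (1%:M : 'M[C]_n) = 1%:M.
Proof. by apply/matrixP=> i j; rewrite !mxE eq_sym; case: eqP; rewrite ?conjC1 ?conjC0. Qed.

Lemma adjmx_diag n (d : 'rV[C]_n) : (forall k, (d 0 k)^* = d 0 k) -> adjmx (diag_mx d) = diag_mx d.
Proof.
move=> Hd; apply/matrixP=> i j; rewrite !mxE eq_sym.
by case: (i =P j) => [->|_]; rewrite ?mulr1n ?mulr0n ?Hd ?conjC0.
Qed.

Lemma conj_mul_ge0 (x : C) : 0 <= x^* * x.
Proof. by rewrite mulrC mul_conjC_ge0. Qed.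

Lemma diag_adj m n (Z : 'M[C]_(m, n)) k :
  (adjmx Z *m Z) k k = \sum_i (Z i k)^* * Z i k.
Proof. by rewrite !mxE; apply: eq_bigr => i _; rewrite adjmxE. Qed.

Lemma diag_adj_ge0 m n (Z : 'M[C]_(m, n)) k : 0 <= (adjmx Z *m Z) k k.
Proof.
rewrite diag_adj; apply: sumr_ge0 => i _; rewrite mulrC; exact: mul_conjC_ge0.
Qed.

Lemma fro_ge0 m n (Z : 'M[C]_(m, n)) : 0 <= fro Z.
Proof. by rewrite /fro /mxtrace; apply: sumr_ge0 => k _; apply: diag_adj_ge0. Qed.

Lemma fro_eq0 m n (Z : 'M[C]_(m, n)) : fro Z = 0 -> Z = 0.
Proof.
rewrite /fro /mxtrace => H0.
have H := psumr_eq0P (fun k _ => diag_adj_ge0 Z k) H0.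
apply/matrixP=> i j; rewrite mxE.
have := H j isT; rewrite diag_adj => H1.
have H2 := psumr_eq0P (fun l _ => conj_mul_ge0 (Z l j)) H1.
by have /eqP := H2 i isT; rewrite mulrC mul_conjC_eq0 => /eqP.
Qed.

Lemma tr_adj n (A : 'M[C]_n) : \tr (adjmx A) = (\tr A)^*.
Proof. by rewrite /mxtrace rmorph_sum; apply: eq_bigr => i _; rewrite adjmxE. Qed.

Lemma cross_real m n (U V : 'M[C]_(m, n)) :
  \tr (adjmx U *m V) + \tr (adjmx V *m U) \is Num.real.
Proof.
have -> : adjmx V *m U = adjmx (adjmx U *m V) by rewrite adjmxM adjmxK.
by rewrite tr_adj CrealE rmorphD /= conjCK addrC.
Qed.

Lemma fro_expand m n (U V : 'M[C]_(m, n)) (e : C) : e^* = e ->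
  fro (U + e *: V) = fro U + e * (\tr (adjmx U *m V) + \tr (adjmx V *m U))
     + e ^+ 2 * fro V.
Proof.
move=> He; rewrite /fro adjmxD adjmxZ He mulmxDl !mulmxDr -!scalemxAl -!scalemxAr.
rewrite ?scalerA !mxtraceD !mxtraceZ.
ring.
Qed.

End Basics.



Section Spec.
Variable R : realType.
Local Notation C := (R[i]).

Lemma adjE m n (A : 'M[C]_(m, n)) : adjmx A = (A ^t*)%sesqui.
Proof. by apply/matrixP => i j; rewrite !mxE. Qed.

Lemma char_poly_sim n (P D : 'M[C]_n) : P \in unitmx ->
  char_poly (invmx P *m D *m P) = char_poly D.
Proof.
move=> Pu; rewrite /char_poly /char_poly_mx.
set Qp := map_mx polyC (invmx P); set Pp := map_mx polyC P.
have QP : Qp *m Pp = 1%:M by rewrite -map_mxM mulVmx // map_mx1.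
have -> : 'X%:M - map_mx polyC (invmx P *m D *m P) = Qp *m ('X%:M - map_mx polyC D) *m Pp.
  rewrite !map_mxM mulmxBr mulmxBl -/Qp -/Pp; congr (_ - _).
  by rewrite scalar_mxC -mulmxA QP mulmx1.
set Y := 'X%:M - map_mx polyC D.
rewrite (det_mulmx (Qp *m Y) Pp) (det_mulmx Qp Y) mulrAC -(det_mulmx Qp Pp) QP.
by rewrite det1 mul1r.
Qed.

Variable n : nat.
Variable M : 'M[C]_n.
Hypothesis Mherm : adjmx M = M.

Definition sP := spectralmx M.
Definition sd := spectral_diag M.

Lemma sP_unitary : sP *m adjmx sP = 1%:M.
Proof. by rewrite adjE; apply/unitarymxP; apply: spectral_unitarymx. Qed.

Lemma sP_unitary' : adjmx sP *m sP = 1%:M.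
Proof.
rewrite adjE -invmx_unitary; last exact: spectral_unitarymx.
by rewrite mulVmx // spectral_unit.
Qed.

Lemma sM_eq : M = adjmx sP *m diag_mx sd *m sP.
Proof.
have Mn : M \is normalmx.
  apply/normalmxP; by rewrite -adjE Mherm.
rewrite adjE -invmx_unitary; last exact: spectral_unitarymx.
exact/orthomx_spectralP.
Qed.

Lemma sdiag_eq : diag_mx sd = sP *m M *m adjmx sP.
Proof.
by rewrite {1}sM_eq !mulmxA sP_unitary mul1mx -mulmxA sP_unitary mulmx1.
Qed.

Lemma char_poly_sM : char_poly M = \prod_(k < n) ('X - (sd 0 k)%:P).
Proof.
rewrite {1}sM_eq adjE -invmx_unitary; last exact: spectral_unitarymx.
rewrite char_poly_sim ?spectral_unit // char_poly_trig ?diag_mx_is_trig //.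
by apply: eq_bigr => k _; rewrite mxE eqxx mulr1n.
Qed.

End Spec.

Lemma sd_ge0 (R : realType) n (X : 'M[R[i]]_n) k : 0 <= sd (adjmx X *m X) 0 k.
Proof.
have -> : sd (adjmx X *m X) 0 k = diag_mx (sd (adjmx X *m X)) k k by rewrite mxE eqxx mulr1n.
have H : adjmx (adjmx X *m X) = adjmx X *m X by rewrite adjmxM adjmxK.
rewrite (sdiag_eq H).
have -> : sP (adjmx X *m X) *m (adjmx X *m X) *m adjmx (sP (adjmx X *m X)) =
  adjmx (X *m adjmx (sP (adjmx X *m X))) *m (X *m adjmx (sP (adjmx X *m X))).
  by rewrite adjmxM adjmxK !mulmxA.
exact: diag_adj_ge0.
Qed.



Section SV.
Variable R : realType.
Local Notation C := (R[i]).

Lemma toC_le (x y : R) : (toC x <= toC y) = (x <= y).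
Proof. by rewrite lecE /= eqxx. Qed.

Lemma prod_ord_seq n (F : C -> {poly C}) (d : 'I_n -> C) :
  \prod_(k < n) F (d k) = \prod_(y <- [seq d k | k <- enum 'I_n]) F y.
Proof. by rewrite big_map enumT. Qed.

Lemma sv_index n (X : 'M[C]_n) s :
  singular_values X s -> (1 < n)%N ->
  exists k0 k1 : 'I_n, [/\ k0 != k1,
     sd (adjmx X *m X) 0 k0 = toC (s`_0 ^+ 2),
     sd (adjmx X *m X) 0 k1 = toC (s`_1 ^+ 2),
     forall k, sd (adjmx X *m X) 0 k <= toC (s`_0 ^+ 2) &
     forall k, k != k0 -> sd (adjmx X *m X) 0 k <= toC (s`_1 ^+ 2)].
Proof.
move=> [Hsz Hsort Hpos Hchar] n1.
set d := sd (adjmx X *m X).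
have Hh : adjmx (adjmx X *m X) = adjmx X *m X by rewrite adjmxM adjmxK.
set t := [seq d 0 k | k <- enum 'I_n].
set s2 := [seq toC (x ^+ 2) | x <- s].
have Hp : perm_eq t s2.
  apply: prod_XsubC_eq.
  rewrite -(prod_ord_seq (fun y => 'X - y%:P) (fun k => d 0 k)).
  by rewrite big_map -Hchar char_poly_sM.
have [Is HIs Ht] := perm_iotaP 0 Hp.
have szs2 : size s2 = n by rewrite size_map.
rewrite szs2 in HIs.
have uIs : uniq Is by rewrite (perm_uniq HIs) iota_uniq.
have szIs : size Is = n by rewrite (perm_size HIs) size_iota.
have memIs i : (i \in Is) = (i < n)%N by rewrite (perm_mem HIs) mem_iota.
have Hd (k : 'I_n) : d 0 k = toC (s`_(nth 0%N Is k) ^+ 2).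
  have : nth 0 t k = d 0 k.
    by rewrite (nth_map k) ?size_enum_ord // nth_ord_enum.
  rewrite Ht (nth_map 0%N) ?szIs // => <-.
  rewrite (nth_map 0) // Hsz -memIs mem_nth // szIs //.
have ltI i : (i < n)%N -> (nth 0%N Is i < n)%N by move=> ?; rewrite -memIs mem_nth // szIs.
have i0 : (index 0%N Is < n)%N by rewrite -szIs index_mem memIs (ltn_trans _ n1).
have i1 : (index 1%N Is < n)%N by rewrite -szIs index_mem memIs.
have ge_tr : transitive (>=%R : rel R) by move=> ? ? ? /= h1 h2; apply: le_trans h2 h1.
have ge_rf : reflexive (>=%R : rel R) by move=> ? /=.
have Hs j i : (j < n)%N -> (i <= j)%N -> s`_j <= s`_i.
  move=> jn ij; apply: (sorted_leq_nth ge_tr ge_rf 0 Hsort) => //;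
    rewrite inE Hsz //; exact: leq_ltn_trans jn.
have Hs0 j : (j < n)%N -> 0 <= s`_j.
  by move=> jn; apply: (allP Hpos); rewrite mem_nth // Hsz.
have Hsq j i : (j < n)%N -> (i <= j)%N -> s`_j ^+ 2 <= s`_i ^+ 2.
  move=> jn ij; rewrite !expr2; apply: ler_pM; rewrite ?Hs0 ?Hs //.
have m1 : (1%N \in Is) by rewrite memIs.
have m0 : (0%N \in Is) by rewrite memIs (ltn_trans _ n1).
exists (Ordinal i0), (Ordinal i1); split.
- apply/negP => /eqP /(congr1 val); rewrite /= => e.
  have := nth_index 0%N m1; rewrite -e nth_index //.
- by rewrite Hd /= nth_index.
- by rewrite Hd /= nth_index.
- by move=> k; rewrite Hd toC_le; apply: Hsq => //; apply: ltI.
- move=> k kk0; rewrite Hd toC_le; apply: Hsq; first by apply: ltI.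
  rewrite lt0n; apply/negP => /eqP e0; move: kk0; apply/negP; rewrite negbK.
  apply/eqP/val_inj; rewrite /= -e0 index_uniq // szIs //.
Qed.

End SV.



Section KF.
Variable R : realType.
Local Notation C := (R[i]).

Lemma F_formula n m (X : 'M[C]_n) (W : 'M[C]_(m, n)) :
  let M := adjmx X *m X in let Y := W *m adjmx (sP M) in
  fro (X *m adjmx W) = \sum_k sd M 0 k * (adjmx Y *m Y) k k.
Proof.
move=> M Y.
have Hh : adjmx M = M by rewrite adjmxM adjmxK.
rewrite /fro adjmxM adjmxK.
have -> : W *m adjmx X *m (X *m adjmx W) = Y *m diag_mx (sd M) *m adjmx Y.
  rewrite /Y adjmxM adjmxK !mulmxA -[W *m adjmx X *m X]mulmxA -/M.
  by rewrite {1}(sM_eq Hh) !mulmxA.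
rewrite mxtrace_mulC mulmxA mxtrace_mulC mul_diag_mx /mxtrace.
by apply: eq_bigr => k _; rewrite mxE.
Qed.

Lemma proj_diag m n (Y : 'M[C]_(m, n)) k : Y *m adjmx Y = 1%:M ->
  0 <= (adjmx Y *m Y) k k <= 1.
Proof.
move=> HY; set Pi := adjmx Y *m Y.
have h0 : 0 <= Pi k k by apply: diag_adj_ge0.
rewrite h0 /=.
have PiA : adjmx Pi = Pi by rewrite /Pi adjmxM adjmxK.
have PiP : Pi *m Pi = Pi by rewrite /Pi mulmxA -[adjmx Y *m Y *m _]mulmxA HY mulmx1.
have real_k : (Pi k k)^* = Pi k k by rewrite -[in RHS]PiA adjmxE.
have Hsq : Pi k k * Pi k k <= Pi k k.
  have e : Pi k k = (adjmx Pi *m Pi) k k by rewrite PiA PiP.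
  rewrite [X in _ <= X]e diag_adj (bigD1 k) //= real_k lerDl.
  by apply: sumr_ge0 => j _; apply: conj_mul_ge0.
rewrite le_eqVlt in h0; case/predU1P: h0 => [<-|h0]; first by rewrite ler01.
have : Pi k k * (Pi k k - 1) <= 0 by rewrite mulrBr mulr1 subr_le0.
by rewrite pmulr_rle0 // subr_le0.
Qed.

Lemma toCD (a b : R) : toC (a + b) = toC a + toC b.
Proof. by apply/eqP; rewrite eq_complex /= addr0 !eqxx. Qed.

Lemma unitY n m (X : 'M[C]_n) (W : 'M[C]_(m, n)) :
  W *m adjmx W = 1%:M ->
  let Y := W *m adjmx (sP (adjmx X *m X)) in Y *m adjmx Y = 1%:M.
Proof.
move=> HW Y.
have Hh : adjmx (adjmx X *m X) = adjmx X *m X by rewrite adjmxM adjmxK.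
rewrite /Y adjmxM adjmxK mulmxA -[W *m _ *m _]mulmxA sP_unitary' // mulmx1 //.
Qed.

Lemma kf_upper n (X : 'M[C]_n) (W : 'M[C]_(2, n)) s : (1 < n)%N ->
  singular_values X s -> W *m adjmx W = 1%:M ->
  fro (X *m adjmx W) <= toC (s`_0 ^+ 2 + s`_1 ^+ 2).
Proof.
move=> n1 Hsv HW; rewrite F_formula.
have HY := unitY X HW.
set M := adjmx X *m X in HY *.
set Y := W *m adjmx (sP M) in HY *.
have [k0 [k1 [ne e0 e1 H0 H1]]] := sv_index Hsv n1.
rewrite -/M in e0 e1 H0 H1.
set pi := fun k => (adjmx Y *m Y) k k.
have pb k : 0 <= pi k <= 1 by apply: proj_diag.
have psum : \sum_k pi k = 2%:R.
  by rewrite -[\sum_k pi k]/(\tr (adjmx Y *m Y)) mxtrace_mulC HY mxtrace1.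
set a := toC (s`_0 ^+ 2); set b := toC (s`_1 ^+ 2).
have ba : b <= a by rewrite /b -e1; apply: H0.
have b0 : 0 <= b by rewrite /b -e1; apply: sd_ge0.
rewrite toCD -/a -/b.
apply: (@le_trans _ _ (a * pi k0 + b * (2%:R - pi k0))).
  rewrite (bigD1 k0) //= e0 -/a lerD2l.
  have -> : 2%:R - pi k0 = \sum_(k | k != k0) pi k.
    by rewrite -psum (bigD1 k0) //= addrC addrK.
  rewrite mulr_sumr; apply: ler_sum => k kk0.
  by apply: ler_wpM2r; [case/andP: (pb k) | apply: H1].
have [p0 p1] := andP (pb k0).
rewrite -subr_ge0.
have -> : a + b - (a * pi k0 + b * (2%:R - pi k0)) = (a - b) * (1 - pi k0) by ring.
by apply: mulr_ge0; rewrite subr_ge0.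
Qed.



Lemma kf_attain n (X : 'M[C]_n) s : (1 < n)%N -> singular_values X s ->
  exists W : 'M[C]_(2, n), W *m adjmx W = 1%:M /\
    fro (X *m adjmx W) = toC (s`_0 ^+ 2 + s`_1 ^+ 2).
Proof.
move=> n1 Hsv.
have [k0 [k1 [ne e0 e1 _ _]]] := sv_index Hsv n1.
set M := adjmx X *m X in e0 e1.
have Hh : adjmx M = M by rewrite adjmxM adjmxK.
pose kk (i : 'I_2) := if i == 0 then k0 else k1.
have ord2 (i : 'I_2) : i = 0 \/ i = 1.
  by case: i => [[|[|//]] ?]; [left|right]; apply: val_inj.
have kk_inj : injective kk.
  move=> i i'; rewrite /kk.
  by case: (ord2 i) => ->; case: (ord2 i') => -> //= /eqP; rewrite ?(negbTE ne) // eq_sym (negbTE ne).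
pose S := \matrix_(i < 2, j < n) ((j == kk i)%:R : C).
have SS : S *m adjmx S = 1%:M.
  apply/matrixP => i i'; rewrite !mxE (bigD1 (kk i)) //= big1.
    by rewrite !mxE eqxx mul1r conjC_nat addr0 (inj_eq kk_inj).
  by move=> j /negbTE jk; rewrite !mxE jk mul0r.
have SY : S *m sP M *m adjmx (sP M) = S by rewrite -mulmxA sP_unitary // mulmx1.
exists (S *m sP M); split.
  by rewrite adjmxM mulmxA -[S *m _ *m _]mulmxA sP_unitary // mulmx1 SS.
rewrite F_formula -/M SY toCD -e0 -e1.
have -> : \sum_k sd M 0 k * (adjmx S *m S) k k =
   \sum_k \sum_(i < 2) sd M 0 k * (k == kk i)%:R.
  apply: eq_bigr => k _; rewrite !mxE mulr_sumr; apply: eq_bigr => i _.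
  by rewrite !mxE conjC_nat; case: (k == kk i); rewrite ?mulr1 ?mulr0.
rewrite exchange_big big_ord_recl big_ord1 /=.
rewrite (bigD1 (kk 0)) //= big1; last by move=> j /negbTE ->; rewrite mulr0.
rewrite (bigD1 (kk (lift 0 0))) //= big1; last by move=> j /negbTE ->; rewrite mulr0.
by rewrite !eqxx !mulr1 !addr0.
Qed.

End KF.



Section SVE.
Variable R : realType.
Local Notation C := (R[i]).

Lemma toC_Re (z : C) : 0 <= z -> toC (complex.Re z) = z.
Proof.
move=> z0; have := ger0_Im z0; case: z z0 => a b z0 /= ->; by [].
Qed.

Lemma Re_ge0 (z : C) : 0 <= z -> 0 <= complex.Re z.
Proof. by case: z => a b; rewrite lecE /= => /andP[]. Qed.

Lemma sv_exists n (X : 'M[C]_n) : exists s, singular_values X s.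
Proof.
set M := adjmx X *m X.
have Hh : adjmx M = M by rewrite adjmxM adjmxK.
set l := [seq Num.sqrt (complex.Re (sd M 0 k)) | k <- enum 'I_n].
have tot : total (>=%R : rel R) by move=> x y /=; rewrite orbC le_total.
exists (sort >=%R l); split.
- by rewrite size_sort size_map size_enum_ord.
- exact: sort_sorted.
- by rewrite all_sort; apply/allP => x /mapP [k _ ->]; rewrite sqrtr_ge0.
- rewrite char_poly_sM // (perm_big _ (permEl (perm_sort _ _))) /= big_map enumT.
  apply: eq_bigr => k _; rewrite sqr_sqrtr ?Re_ge0 ?sd_ge0 //.
  by rewrite toC_Re // sd_ge0.
Qed.

End SVE.



Section G.
Variable R : realType.
Local Notation C := (R[i]).

Lemma toC_rc (x : R) : toC x = (x%:C)%C.
Proof. by []. Qed.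

Lemma toC_half : toC (1/2 : R) = 1/2.
Proof. by rewrite toC_rc rmorphM rmorph1 fmorphV rmorph_nat. Qed.

Lemma XmatZ a (A B : 'M[C]_4) : Xmat (a *: A) (a *: B) = a *: Xmat A B.
Proof. by apply/matrixP => i j; rewrite /Xmat !mxE; ring. Qed.

Lemma XmatD (A B A' B' : 'M[C]_4) : Xmat (A + A') (B + B') = Xmat A B + Xmat A' B'.
Proof. by apply/matrixP => i j; rewrite /Xmat !mxE; ring. Qed.

Lemma froZ m n a (Z : 'M[C]_(m, n)) : fro (a *: Z) = a^* * a * fro Z.
Proof. by rewrite /fro adjmxZ -scalemxAl -scalemxAr !mxtraceZ mulrA. Qed.

Lemma fro0 m n : fro (0 : 'M[C]_(m, n)) = 0.
Proof. by rewrite /fro mulmx0 mxtrace0. Qed.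

Lemma eigsZ a (A : 'M[C]_4) : a != 0 -> distinct_eigs4 A -> distinct_eigs4 (a *: A).
Proof.
move=> a0 [e [ei He]]; exists (fun k => a * e k); split.
  by move=> i j /(mulfI a0) /ei.
move=> k; have /eigenvalueP [v Hv v0] := He k; apply/eigenvalueP; exists v => //.
by rewrite -scalemxAr Hv scalerA.
Qed.

Lemma stepG (H : forall A B : 'M[C]_4, inY A B -> phi_le A B (1 / 2))
  (A B : 'M[C]_4) (W : 'M[C]_(2, 4 * 4)) :
  \tr A = 0 -> \tr B = 0 -> distinct_eigs4 A -> distinct_eigs4 B ->
  W *m adjmx W = 1%:M ->
  fro (Xmat A B *m adjmx W) <= 2 * (frob2 A + frob2 B).
Proof.
move=> tA tB dA dB HW.
set N := frob2 A + frob2 B.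
have fA : 0 <= frob2 A := fro_ge0 A.
have fB : 0 <= frob2 B := fro_ge0 B.
have N0 : 0 <= N by apply: addr_ge0.
rewrite le_eqVlt in N0; case/predU1P: N0 => [N0|Npos].
  move/eqP: (N0); rewrite eq_sym paddr_eq0 // => /andP [/eqP a0 /eqP b0].
  have -> : A = 0 by apply: fro_eq0.
  have -> : B = 0 by apply: fro_eq0.
  by rewrite -N0 /Xmat tens0mx tensmx0 addr0 mul0mx fro0 mulr0.
set lam := sqrtC ((4 * N)^-1).
have l2 : lam ^+ 2 = (4 * N)^-1 by rewrite sqrtCK.
have N4 : 0 < 4 * N by rewrite mulr_gt0.
have lge0 : 0 <= lam by rewrite sqrtC_ge0 invr_ge0 ltW.
have lc : lam^* = lam by apply/eqP; rewrite -CrealE ger0_real.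
have l0 : lam != 0.
  by apply/eqP => e; move: l2; rewrite e expr0n /= => /esym /eqP; rewrite invr_eq0 gt_eqF.
have hY : inY (lam *: A) (lam *: B).
  split; last by split; apply: eigsZ.
  split; first by rewrite mxtraceZ tA mulr0.
  split; first by rewrite mxtraceZ tB mulr0.
  rewrite /frob2 -/(fro (lam *: A)) -/(fro (lam *: B)).
  rewrite !froZ lc -mulrDr -expr2 l2 -/N.
  field; exact: lt0r_neq0.
have [s Hs] := sv_exists (Xmat (lam *: A) (lam *: B)).
have Hp := H _ _ hY s Hs.
have Hk := kf_upper (isT : (1 < 4 * 4)%N) Hs HW.
rewrite XmatZ -scalemxAl froZ lc -expr2 l2 in Hk.
have Hk2 : (4 * N)^-1 * fro (Xmat A B *m adjmx W) <= 1 / 2.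
  apply: (le_trans Hk); rewrite -toC_half toC_le //.
have -> : fro (Xmat A B *m adjmx W) = (4 * N) * ((4 * N)^-1 * fro (Xmat A B *m adjmx W)).
  by rewrite mulrA mulfV ?mul1r // lt0r_neq0.
apply: (le_trans (ler_wpM2l (ltW N4) Hk2)).
by rewrite -/N le_eqVlt; apply/orP; left; apply/eqP; field.
Qed.

End G.



Section Pert.
Variable R : realType.
Local Notation C := (R[i]).

Definition cc (k : 'I_4) : C := (2 * k)%:R - 3%:R.

Lemma cc_sum : \sum_(k < 4) cc k = 0.
Proof. rewrite /cc !big_ord_recr big_ord0 /=; ring. Qed.

Lemma cc_inj j k : cc j = cc k -> j = k.
Proof.
rewrite /cc => /addIr /eqP; rewrite eqr_nat => /eqP e.
by apply: val_inj; have := e; rewrite !mul2n => /double_inj.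
Qed.

Lemma cc_bound j k : `|cc j - cc k| <= 18%:R.
Proof.
apply: (le_trans (ler_normB _ _)).
have h (i : 'I_4) : `|cc i| <= 9%:R.
  rewrite /cc; apply: (le_trans (ler_normB _ _)); rewrite !normr_nat -natrD ler_nat.
  by case: i => m hm; rewrite -[9%N]/(2*3+3)%N leq_add2r leq_pmul2l // -ltnS.
by apply: (le_trans (lerD (h j) (h k))); rewrite -natrD.
Qed.

Lemma eig_sim (P T : 'M[C]_4) a : P \in unitmx -> eigenvalue T a ->
  eigenvalue (invmx P *m T *m P) a.
Proof.
move=> Pu /eigenvalueP [v Hv v0]; apply/eigenvalueP; exists (v *m P).
  by rewrite !mulmxA mulmxK // Hv scalemxAl.
apply: contra v0 => /eqP vP; apply/eqP.
by rewrite -[v](mulmxK Pu) vP mul0mx.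
Qed.

Lemma eig_trig (T : 'M[C]_4) k : is_trig_mx T -> eigenvalue T (T k k).
Proof.
move=> Tt; rewrite eigenvalue_root_char char_poly_trig // rootE horner_prod.
by rewrite (bigD1 k) //= hornerXsubC subrr mul0r.
Qed.

Lemma perturb (A : 'M[C]_4) : exists (E : 'M[C]_4) (t : 'I_4 -> C),
  \tr E = 0 /\ forall e : C, 0 < e ->
  (forall j k, t j != t k -> e * 19%:R < `|t j - t k|) ->
  distinct_eigs4 (A + e *: E).
Proof.
have [P Pu Pt] := Schur A isT.
have Pun : P \in unitmx by apply: unitarymx_unit.
move: Pt; rewrite /similar_to /conjmx pinvmxE // => Tt.
set T := P *m A *m invmx P in Tt.
set D := diag_mx (\row_k cc k).
exists (invmx P *m D *m P), (fun k => T k k); split.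
  rewrite mxtrace_mulC mulmxA mulmxV // mul1mx /mxtrace.
  rewrite -[RHS]cc_sum; apply: eq_bigr => k _; rewrite !mxE eqxx mulr1n //.
move=> e e0 He.
have AE : A + e *: (invmx P *m D *m P) = invmx P *m (T + e *: D) *m P.
  rewrite mulmxDr mulmxDl; congr (_ + _).
    by rewrite /T !mulmxA mulVmx // mul1mx -mulmxA mulVmx // mulmx1.
  by rewrite -scalemxAr -scalemxAl.
rewrite AE.
have T't : is_trig_mx (T + e *: D).
  apply/is_trig_mxP => i j ij.
  have Tij : T i j = 0 by move/is_trig_mxP: Tt; apply.
  rewrite [(T + _) i j]mxE Tij [(e *: D) i j]mxE /D mxE.
  have -> : (i == j) = false by rewrite -val_eqE /= ltn_eqF.
  by rewrite mulr0n mulr0 add0r.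
exists (fun k => T k k + e * cc k); split.
  move=> j k /= ejk.
  case: (eqVneq (T j j) (T k k)) => [tjk | tjk].
    rewrite tjk in ejk; move/addrI: ejk => /(mulfI (lt0r_neq0 e0)).
    exact: cc_inj.
  exfalso.
  have d : T j j - T k k = e * (cc k - cc j).
    by rewrite -[T j j](addrK (e * cc j)) ejk; ring.
  have h2 : `|T j j - T k k| <= e * 18%:R.
    rewrite d normrM gtr0_norm //; apply: ler_wpM2l; [exact: ltW | exact: cc_bound].
  have h1 := lt_le_trans (He j k tjk) h2.
  by rewrite ltr_pM2l // ltr_nat in h1.
move=> k; have := eig_sim Pun (eig_trig k T't).
have Dkk : D k k = cc k by rewrite /D !mxE eqxx mulr1n.
by have -> : (T + e *: D) k k = T k k + e * cc k by rewrite [LHS]mxE [(e *: D) k k]mxE Dkk.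
Qed.

End Pert.



Lemma small_e (F : numFieldType) (L : seq F) : all (fun x => 0 < x) L ->
  exists e, 0 < e /\ all (fun x => e < x) L.
Proof.
elim: L => [|x L IH] /=; first by move=> _; exists 1; split => //; exact: ltr01.
case/andP => x0 /IH [e' [e'0 He']].
have s0 : 0 < e' + x by rewrite addr_gt0.
exists (e' * x / (e' + x)); split; first by rewrite divr_gt0 // mulr_gt0.
have ee' : e' * x / (e' + x) < e'.
  by rewrite ltr_pdivrMr // mulrDr ltrDr mulr_gt0.
apply/andP; split.
  by rewrite ltr_pdivrMr // mulrDr [x * e']mulrC ltrDl mulr_gt0.
apply/allP => y yL; apply: (lt_trans ee'); exact: (allP He').
Qed.

Lemma lim_arg (F : numFieldType) (a b c : F) (L : seq F) :
  a \is Num.real -> b \is Num.real -> c \is Num.real ->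
  all (fun x => 0 < x) L ->
  (forall e, 0 < e -> all (fun x => e < x) L -> 0 <= a + e * b + e ^+ 2 * c) ->
  0 <= a.
Proof.
move=> Ha Hb Hc HL Hp.
rewrite real_leNgt ?real0 //; apply/negP => a0.
set K := `|b| + `|c| + 1.
have K0 : 0 < K by apply: ltr_wpDl; [exact: addr_ge0 | exact: ltr01].
have bnd0 : 0 < - a / K by rewrite divr_gt0 // oppr_gt0.
have [e [e0 He]] := small_e (L := 1 :: (- a / K) :: L) (ltac:(by rewrite /= ltr01 bnd0 HL)).
move: He => /= /and3P [e1 eb HeL].
suff hp : a + e * b + e ^+ 2 * c < 0.
  by have := lt_le_trans hp (Hp e e0 HeL); rewrite ltxx.
have h1 : e * b <= e * `|b| by apply: ler_wpM2l; [exact: ltW | exact: real_ler_norm].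
have h2 : e ^+ 2 * c <= e * `|c|.
  apply: (le_trans (y := e ^+ 2 * `|c|)).
    by apply: ler_wpM2l; [exact: exprn_ge0 (ltW e0) | exact: real_ler_norm].
  apply: ler_wpM2r => //; rewrite expr2 -[X in _ <= X]mulr1.
  by apply: ler_wpM2l; exact: ltW.
have h3 : a + e * K < 0.
  have : e * K + a < - a + a by rewrite ltrD2r -ltr_pdivlMr.
  by rewrite addNr addrC.
apply: (le_lt_trans _ h3).
rewrite -addrA lerD2l /K mulrDr mulrDr mulr1 -addrA lerD //.
apply: (le_trans h2); rewrite lerDl ltW //.
Qed.

Theorem theorem3 (R : realType) :
  (forall A B : 'M[R[i]]_4, inX A B -> phi_le A B (1 / 2)) <->
  (forall A B : 'M[R[i]]_4, inY A B -> phi_le A B (1 / 2)).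
Proof.
split; first by move=> H A B [hX _]; apply: H.
move=> H A B [tA [tB hN]] s Hs.
have [W [HW HF]] := kf_attain (isT : (1 < 4 * 4)%N) Hs.
have [EA [tAf [trEA HA]]] := perturb A.
have [EB [tBf [trEB HB]]] := perturb B.
set X := Xmat A B in HF; set Y := Xmat EA EB.
set U := X *m adjmx W in HF; set V := Y *m adjmx W.
set a := 2 * (fro A + fro B) - fro U.
set b := 2 * ((\tr (adjmx A *m EA) + \tr (adjmx EA *m A)) +
              (\tr (adjmx B *m EB) + \tr (adjmx EB *m B))) -
         (\tr (adjmx U *m V) + \tr (adjmx V *m U)).
set c := 2 * (fro EA + fro EB) - fro V.
pose fA (p : 'I_4 * 'I_4) : R[i] :=
  if tAf p.1 == tAf p.2 then 1 else `|tAf p.1 - tAf p.2| / 19%:R.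
pose fB (p : 'I_4 * 'I_4) : R[i] :=
  if tBf p.1 == tBf p.2 then 1 else `|tBf p.1 - tBf p.2| / 19%:R.
set L := [seq fA p | p <- enum {: 'I_4 * 'I_4}] ++
         [seq fB p | p <- enum {: 'I_4 * 'I_4}].
have HL : all (fun x => 0 < x) L.
  rewrite all_cat; apply/andP; split; apply/allP => x /mapP [p _ ->];
    rewrite /fA /fB; case: eqP => [_|/eqP ne]; rewrite ?ltr01 //;
    by rewrite divr_gt0 // normr_gt0 subr_eq0.
have a0 : 0 <= a.
  apply: (lim_arg (b := b) (c := c) (L := L)) => //.
  - by rewrite /a rpredB ?rpredM ?rpredD ?realn ?ger0_real ?fro_ge0.
  - apply: rpredB; last exact: cross_real.
    apply: rpredM; first exact: realn.
    by apply: rpredD; exact: cross_real.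
  - by rewrite /c rpredB ?rpredM ?rpredD ?realn ?ger0_real ?fro_ge0.
  move=> e e0 /allP HeL.
  have condA j k : tAf j != tAf k -> e * 19%:R < `|tAf j - tAf k|.
    move=> ne; have := HeL (fA (j, k)).
    rewrite mem_cat map_f ?mem_enum // /fA /= (negbTE ne) ltr_pdivlMr //.
    by move=> /(_ isT).
  have condB j k : tBf j != tBf k -> e * 19%:R < `|tBf j - tBf k|.
    move=> ne; have := HeL (fB (j, k)).
    rewrite mem_cat [X in _ || X]map_f ?orbT ?mem_enum // /fB /= (negbTE ne) ltr_pdivlMr //.
    by move=> /(_ isT).
  have dA := HA e e0 condA; have dB := HB e e0 condB.
  have ec : e^* = e by apply/eqP; rewrite -CrealE gtr0_real.
  have trA : \tr (A + e *: EA) = 0 by rewrite mxtraceD mxtraceZ tA trEA mulr0 addr0.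
  have trB : \tr (B + e *: EB) = 0 by rewrite mxtraceD mxtraceZ tB trEB mulr0 addr0.
  have := stepG H trA trB dA dB HW.
  rewrite XmatD XmatZ mulmxDl -scalemxAl -/X -/Y -/U -/V.
  have eA : frob2 (A + e *: EA) = fro A + e * (\tr (adjmx A *m EA) + \tr (adjmx EA *m A))
     + e ^+ 2 * fro EA := fro_expand A EA ec.
  have eB : frob2 (B + e *: EB) = fro B + e * (\tr (adjmx B *m EB) + \tr (adjmx EB *m B))
     + e ^+ 2 * fro EB := fro_expand B EB ec.
  rewrite eA eB (fro_expand U V ec) => Hle; rewrite -subr_ge0 in Hle.
  apply: (le_trans Hle); rewrite le_eqVlt; apply/orP; left; apply/eqP.
  rewrite /a /b /c.
  set tAA := \tr (adjmx A *m EA) + \tr (adjmx EA *m A).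
  set tBB := \tr (adjmx B *m EB) + \tr (adjmx EB *m B).
  set tUV := \tr (adjmx U *m V) + \tr (adjmx V *m U).
  set fa := fro A; set fb := fro B; set fea := fro EA; set feb := fro EB.
  set fu := fro U; set fv := fro V.
  ring.
have Hle : fro U <= 2 * (frob2 A + frob2 B) by rewrite -subr_ge0.
rewrite hN HF in Hle.
rewrite -toC_le toC_half.
have h2 : (2 * (1 / 4) : R[i]) = 1 / 2 by field.
by rewrite -h2.
Qed.
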